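(* Let $p$ be an odd prime and let $\alpha,\beta,\gamma\in\mathbb{Z}_p$ with $p\nmid\beta$ and $p\nmid\gamma$, and with $(\alpha,\beta-\gamma)\ne(0,0)$. Let $k\ge0$ be the largest integer such that $p^k\mid\alpha$ and $p^k\mid(\beta-\gamma)$. Let $$f(x)=(x^2+p\alpha x+p\beta)(x^2-p\alpha x+p\gamma).$$ (Case 1) If $p^{k+1}\nmid(\beta-\gamma)$, then every monic quartic $g\in\mathbb{Z}_p[x]$ with $g\equiv f\pmod{p^{2k+4}}$ is reducible in $\mathbb{Z}_p[x]$. (Case 2) If $p^{k+1}\mid(\beta-\gamma)$ and $p^{k+1}\nmid\alpha$, then every monic quartic $g\in\mathbb{Z}_p[x]$ with $g\equiv f\pmod{p^{2k+5}}$ is reducible in $\mathbb{Z}_p[x]$.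
   Context: Congruences of polynomials are coefficientwise. Reducible means it can be written as a product of two nonconstant polynomials in $\mathbb{Z}_p[x]$. *)

(* Defs.v *)
(* The ring Z_p of p-adic integers is not in the library:
   we construct it honestly as the inverse limit of the rings Z/p^n Z,
   i.e. sequences (x_n) of integers with x_n = x_{n+1} mod p^n,
   and equip it with its comNzRing structure. *)
From HB Require Import structures.
From mathcomp Require Import all_boot all_order all_algebra.
From mathcomp Require Import boolp.
Set Implicit Arguments. Unset Strict Implicit. Unset Printing Implicit Defensive.
Import Order.TTheory GRing.Theory Num.Theory.
Local Open Scope ring_scope.

Lemma modz_dvd_mod (d d' m : int) : (d %| d')%Z -> ((m %% d')%Z %% d)%Z = (m %% d)%Z.
Proof.
move=> /dvdzP [c ->].
rewrite [in RHS](divz_eq m (c * d)) mulrA modzMDl //.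
Qed.

Section Padic.
Variable p : nat.

(* The modulus: equal to p whenever p >= 2 (in particular for p prime). *)
Definition pmod : nat := (p.-2).+2.
Definition pw (n : nat) : int := (pmod%:Z) ^+ n.

Lemma pw_dvd n : (pw n %| pw n.+1)%Z.
Proof. exact: dvdz_exp2l. Qed.

Lemma pw_gt0 n : 0 < pw n.
Proof. by rewrite exprn_gt0. Qed.

Definition padic_compat (x : nat -> int) := forall n, x n = (x n.+1 %% pw n)%Z.

Record padic := Padic { pseq : nat -> int; pseqP : padic_compat pseq }.

HB.instance Definition _ := gen_eqMixin padic.
HB.instance Definition _ := gen_choiceMixin padic.

Lemma padic_ext (x y : padic) : pseq x =1 pseq y -> x = y.
Proof.
case: x y => [x Hx] [y Hy] /= /funext E; subst y.
by rewrite (Prop_irrelevance Hx Hy).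
Qed.

Lemma pseq_mod (x : padic) n : (pseq x n %% pw n)%Z = pseq x n.
Proof. by rewrite (pseqP x n) modz_mod. Qed.

Lemma compat_red (F : int -> int -> int) (x y : padic) :
  (forall a b d, (F (a %% d)%Z (b %% d)%Z = F a b %[mod d])%Z) ->
  padic_compat (fun n => (F (pseq x n) (pseq y n) %% pw n)%Z).
Proof.
move=> HF n; rewrite modz_dvd_mod ?pw_dvd //.
by rewrite (pseqP x n) (pseqP y n) HF.
Qed.

Definition padic_add_s (x y : padic) n := ((pseq x n + pseq y n) %% pw n)%Z.
Lemma padic_add_compat x y : padic_compat (padic_add_s x y).
Proof. by apply: (compat_red (F := +%R)) => a b d; rewrite modzDm. Qed.
Definition padic_add x y := Padic (padic_add_compat x y).

Definition padic_mul_s (x y : padic) n := ((pseq x n * pseq y n) %% pw n)%Z.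
Lemma padic_mul_compat x y : padic_compat (padic_mul_s x y).
Proof. by apply: (compat_red (F := *%R)) => a b d; rewrite modzMm. Qed.
Definition padic_mul x y := Padic (padic_mul_compat x y).

Definition padic_opp_s (x : padic) n := ((- pseq x n) %% pw n)%Z.
Lemma padic_opp_compat x : padic_compat (padic_opp_s x).
Proof.
apply: (compat_red (F := fun a _ => - a) x x) => a b d.
by rewrite modzNm.
Qed.
Definition padic_opp x := Padic (padic_opp_compat x).

Lemma padic_zero_compat : padic_compat (fun _ => 0).
Proof. by move=> n; rewrite mod0z. Qed.
Definition padic_zero := Padic padic_zero_compat.

Lemma padic_one_compat : padic_compat (fun n => (1 %% pw n)%Z).
Proof. by move=> n; rewrite modz_dvd_mod ?pw_dvd. Qed.
Definition padic_one := Padic padic_one_compat.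

Lemma padic_addA : associative padic_add.
Proof.
move=> x y z; apply: padic_ext => n /=.
by rewrite /padic_add_s /= modzDml modzDmr addrA.
Qed.

Lemma padic_addC : commutative padic_add.
Proof. by move=> x y; apply: padic_ext => n /=; rewrite /padic_add_s addrC. Qed.

Lemma padic_add0 : left_id padic_zero padic_add.
Proof. by move=> x; apply: padic_ext => n /=; rewrite /padic_add_s add0r pseq_mod. Qed.

Lemma padic_addN : left_inverse padic_zero padic_opp padic_add.
Proof.
move=> x; apply: padic_ext => n /=.
by rewrite /padic_add_s /padic_opp_s /= modzDml addNr mod0z.
Qed.

HB.instance Definition _ :=
  GRing.isZmodule.Build padic padic_addA padic_addC padic_add0 padic_addN.

Lemma padic_mulA : associative padic_mul.
Proof.
move=> x y z; apply: padic_ext => n /=.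
by rewrite /padic_mul_s /= modzMml modzMmr mulrA.
Qed.

Lemma padic_mulC : commutative padic_mul.
Proof. by move=> x y; apply: padic_ext => n /=; rewrite /padic_mul_s mulrC. Qed.

Lemma padic_mul1 : left_id padic_one padic_mul.
Proof.
by move=> x; apply: padic_ext => n /=; rewrite /padic_mul_s /= modzMml mul1r pseq_mod.
Qed.

Lemma padic_mulDl : left_distributive padic_mul (@GRing.add padic).
Proof.
move=> x y z; apply: padic_ext => n /=.
rewrite /padic_mul_s /= /padic_add_s /= modzMml modzDm mulrDl //.
Qed.

Lemma padic_one_neq0 : padic_one != 0 :> padic.
Proof.
apply/eqP => /(congr1 (fun x => pseq x 1%N)) /=.
by rewrite /pw expr1 /pmod modz_small.
Qed.

HB.instance Definition _ :=
  GRing.Zmodule_isComNzRing.Build padic padic_mulA padic_mulC padic_mul1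
    padic_mulDl padic_one_neq0.

End Padic.

(* Z_p, the ring of p-adic integers (for p prime; for p < 2 it is Z_2). *)
Notation "''Z_p[' p ]" := (padic p) (format "''Z_p[' p ]").

Definition rdvd (R : comNzRingType) (a b : R) : Prop := exists c : R, b = a * c.

Definition poly_congr (R : comNzRingType) (m : R) (g f : {poly R}) : Prop :=
  forall i : nat, rdvd m (g`_i - f`_i).

Definition reducible (R : comNzRingType) (g : {poly R}) : Prop :=
  exists g1 g2 : {poly R}, (1 < size g1)%N /\ (1 < size g2)%N /\ g = g1 * g2.

(* Main.v *)
Require Import Defs.
From HB Require Import structures.
From mathcomp Require Import all_boot all_order all_algebra.
From mathcomp Require Import ring zify.
From mathcomp Require Import boolp.
Import Order.TTheory GRing.Theory Num.Theory.
Local Open Scope ring_scope.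

Section Found.
Variable p : nat.
Hypothesis p_gt1 : (1 < p)%N.
Local Notation R := ('Z_p[p]).
Local Notation q := (p%:R : R).

Lemma pmodE : pmod p = p.
Proof. by case: p p_gt1 => [|[|n]]. Qed.

Lemma pwE n : pw p n = (p%:Z) ^+ n.
Proof. by rewrite /pw pmodE. Qed.

Lemma pw_pos n : (0 < pw p n)%R.
Proof. exact: pw_gt0. Qed.
Lemma pw_neq0 n : pw p n != 0.
Proof. by rewrite gt_eqF ?pw_pos. Qed.

Lemma pseqD (x y : R) n : pseq (x + y) n = ((pseq x n + pseq y n) %% pw p n)%Z.
Proof. reflexivity. Qed.
Lemma pseqM (x y : R) n : pseq (x * y) n = ((pseq x n * pseq y n) %% pw p n)%Z.
Proof. reflexivity. Qed.
Lemma pseqN (x : R) n : pseq (- x) n = ((- pseq x n) %% pw p n)%Z.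
Proof. reflexivity. Qed.
Lemma pseq1 n : pseq (1 : R) n = (1 %% pw p n)%Z.
Proof. reflexivity. Qed.
Lemma pseq0 n : pseq (0 : R) n = 0.
Proof. reflexivity. Qed.

Lemma eqmD (x y x' y' : R) n : pseq x n = pseq x' n -> pseq y n = pseq y' n ->
  pseq (x + y) n = pseq (x' + y') n.
Proof. by rewrite !pseqD => -> ->. Qed.
Lemma eqmM (x y x' y' : R) n : pseq x n = pseq x' n -> pseq y n = pseq y' n ->
  pseq (x * y) n = pseq (x' * y') n.
Proof. by rewrite !pseqM => -> ->. Qed.
Lemma eqmN (x x' : R) n : pseq x n = pseq x' n -> pseq (- x) n = pseq (- x') n.
Proof. by rewrite !pseqN => ->. Qed.

Lemma pseq_natmul (x : R) m n : pseq (x *+ m) n = ((pseq x n * m%:Z) %% pw p n)%Z.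
Proof.
elim: m => [|m IH]; first by rewrite mulr0n pseq0 mulr0 mod0z.
by rewrite mulrS pseqD IH modzDmr intS mulrDr mulr1.
Qed.

Lemma pseq_exp (x : R) m n : pseq (x ^+ m) n = ((pseq x n ^+ m) %% pw p n)%Z.
Proof.
elim: m => [|m IH]; first by rewrite !expr0 pseq1.
by rewrite exprS pseqM IH modzMmr exprS.
Qed.

Lemma pseq_nat m n : pseq (m%:R : R) n = ((m%:Z) %% pw p n)%Z.
Proof. by rewrite pseq_natmul pseq1 modzMml mul1r. Qed.

Lemma pseq_qpow m n : pseq (q ^+ m) n = (((p%:Z) ^+ m) %% pw p n)%Z.
Proof. by rewrite pseq_exp pseq_nat modzXm. Qed.

Lemma pseq_chain (y : R) n j : pseq y n = (pseq y (n + j) %% pw p n)%Z.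
Proof.
elim: j => [|j IH]; first by rewrite addn0 pseq_mod.
rewrite IH (pseqP y (n + j)) addnS modz_dvd_mod //.
by rewrite /pw exprD dvdz_mulr.
Qed.

Lemma rdvd_pseq (y : R) N : rdvd (q ^+ N) y -> pseq y N = 0.
Proof.
case=> c ->; rewrite pseqM pseq_qpow -pwE modzMml.
by rewrite modzMr.
Qed.

Lemma pseq_rdvd (y : R) N : pseq y N = 0 -> rdvd (q ^+ N) y.
Proof.
move=> y0.
have hdiv : forall n, (pw p N %| pseq y (n + N))%Z.
  move=> n; apply/dvdz_mod0P; by rewrite addnC -pseq_chain.
pose c n := (((pseq y (n + N)) %/ pw p N)%Z %% pw p n)%Z.
have cP : padic_compat p c.
  move=> n; rewrite /c.
  rewrite modz_dvd_mod ?pw_dvd //.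
  have [z hz] := dvdzP (hdiv n.+1).
  rewrite hz mulzK ?pw_neq0 //.
  have -> : pseq y (n + N) = (pseq y (n.+1 + N) %% pw p (n + N))%Z.
    by rewrite (pseqP y (n + N)).
  rewrite hz /pw exprD -/(pw p n) -/(pw p N) -mulz_modl ?pw_pos //.
  by rewrite mulzK ?pw_neq0 // modz_mod.
exists (Padic cP); apply: padic_ext => n.
rewrite pseqM pseq_qpow -pwE modzMml /c /=.
have [z hz] := dvdzP (hdiv n).
rewrite hz mulzK ?pw_neq0 // modzMmr (pseq_chain y n N) hz.
by rewrite mulrC.
Qed.

Lemma padic_eq0 (y : R) : (forall N, pseq y N = 0) -> y = 0.
Proof. by move=> H; apply: padic_ext => n; rewrite H. Qed.

Lemma padic_lim (xs : nat -> R) :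
  (forall n, pseq (xs n.+1) n = pseq (xs n) n) ->
  {x : R | forall n, pseq x n = pseq (xs n) n}.
Proof.
move=> H.
have cP : padic_compat p (fun n => pseq (xs n) n).
  by move=> n /=; rewrite -(pseqP (xs n.+1) n) H.
by exists (Padic cP).
Qed.

End Found.


Section Dvd.
Variable R : comNzRingType.
Implicit Types (m a b x : R).
Lemma rdvd0 m : rdvd m 0. Proof. by exists 0; rewrite mulr0. Qed.
Lemma rdvdD m a b : rdvd m a -> rdvd m b -> rdvd m (a + b).
Proof. by case=> c -> [d ->]; exists (c + d); rewrite mulrDr. Qed.
Lemma rdvdN m a : rdvd m a -> rdvd m (- a).
Proof. by case=> c ->; exists (- c); rewrite mulrN. Qed.
Lemma rdvdB m a b : rdvd m a -> rdvd m b -> rdvd m (a - b).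
Proof. by move=> ha hb; apply: rdvdD => //; apply: rdvdN. Qed.
Lemma rdvdMr m a b : rdvd m a -> rdvd m (a * b).
Proof. by case=> c ->; exists (c * b); rewrite mulrA. Qed.
Lemma rdvdMl m a b : rdvd m b -> rdvd m (a * b).
Proof. by move=> h; rewrite mulrC; apply: rdvdMr. Qed.
Lemma rdvd_mul x i j a b : rdvd (x ^+ i) a -> rdvd (x ^+ j) b -> rdvd (x ^+ (i + j)) (a * b).
Proof. by case=> c -> [d ->]; exists (c * d); rewrite exprD; ring. Qed.
Lemma rdvd_le x i j a : (i <= j)%N -> rdvd (x ^+ j) a -> rdvd (x ^+ i) a.
Proof.
move=> /subnKC <- [c ->]; exists (x ^+ (j - i) * c).
by rewrite exprD mulrA.
Qed.
Lemma rdvd_pw x i c : rdvd (x ^+ i) (x ^+ i * c).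
Proof. by exists c. Qed.
Lemma rdvd_eq m a b : a = b -> rdvd m a -> rdvd m b.
Proof. by move=> ->. Qed.
End Dvd.
Arguments rdvd0 {R} m.
Arguments rdvdD {R m a b}.
Arguments rdvdN {R m a}.
Arguments rdvdB {R m a b}.
Arguments rdvdMr {R m a} b.
Arguments rdvdMl {R m} a {b}.
Arguments rdvd_mul {R x i j a b}.
Arguments rdvd_le {R x i j a}.
Arguments rdvd_pw {R} x i c.
Arguments rdvd_eq {R m a b}.

Section Unit.
Variable p : nat.
Hypothesis pr : prime p.
Local Notation R := ('Z_p[p]).
Local Notation q := (p%:R : R).

Lemma unit_mod (u : R) : ~ rdvd q u -> exists w, rdvd q (u * w - 1).
Proof.
have p1 : (1 < p)%N by exact: prime_gt1.
move=> nu.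
set r := pseq u 1.
have r0 : r != 0.
  apply/eqP => h; apply: nu; rewrite -(expr1 q); exact: (@pseq_rdvd p p1).
have rge : 0 <= r by rewrite /r -pseq_mod modz_ge0 ?pw_neq0.
have rlt : r < p%:Z.
  by rewrite /r -pseq_mod (@pwE p p1 _) expr1 ltz_pmod // ltz_nat; case: p p1.
have [rn rE] : exists rn : nat, r = rn%:Z by exists `|r|%N; rewrite gez0_abs.
have rn0 : (0 < rn)%N by move: r0; rewrite rE; case: (rn).
have rnp : (rn < p)%N by move: rlt; rewrite rE ltz_nat.
have cop : coprime p rn.
  rewrite prime_coprime //; apply/negP => /dvdn_leq => /(_ rn0); lia.
have [a _ ha] := Bezoutl rn (prime_gt0 pr).
rewrite (eqP cop) in ha.
exists (- (a%:R)).
have -> : u * - a%:R - 1 = - (u * a%:R + 1) by ring.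
apply: rdvdN; rewrite -(expr1 q); apply: (@pseq_rdvd p p1).
rewrite pseqD pseqM pseq_nat pseq1 -/r modzMmr modzDml modzDmr rE.
rewrite (@pwE p p1 _) expr1; apply/dvdz_mod0P.
have -> : rn%:Z * a%:Z + 1 = (1 + a * rn)%N%:Z by rewrite PoszD PoszM addrC mulrC.
exact: ha.
Qed.

End Unit.


Section Newton.
Variable p : nat.
Hypothesis p1 : (1 < p)%N.
Local Notation R := ('Z_p[p]).
Local Notation q := (p%:R : R).
Variables g0 g1 g2 g3 a0 b0 c0 d0 : R.
Variable M : nat.

Definition F1 (a b c d : R) := a + c - g3.
Definition F2 (a b c d : R) := b + d + a * c - g2.
Definition F3 (a b c d : R) := a * d + b * c - g1.
Definition F4 (a b c d : R) := b * d - g0.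
Definition L1 (a b c d : R) := a + c.
Definition L2 (a b c d : R) := b + d + c0 * a + a0 * c.
Definition L3 (a b c d : R) := d0 * a + c0 * b + b0 * c + a0 * d.
Definition L4 (a b c d : R) := d0 * b + b0 * d.

Hypothesis Lin : forall s1 s2 s3 s4 : R, exists ea eb ec ed : R,
  [/\ rdvd (q ^+ M.+1) (L1 ea eb ec ed - q ^+ M * s1),
      rdvd (q ^+ M.+1) (L2 ea eb ec ed - q ^+ M * s2),
      rdvd (q ^+ M.+1) (L3 ea eb ec ed - q ^+ M * s3) &
      rdvd (q ^+ M.+1) (L4 ea eb ec ed - q ^+ M * s4)].

Definition Inv n (x : R * R * R * R) : Prop :=
  let: (a, b, c, d) := x in
  [/\ rdvd (q ^+ M.+1) (a - a0), rdvd (q ^+ M.+1) (b - b0),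
      rdvd (q ^+ M.+1) (c - c0) & rdvd (q ^+ M.+1) (d - d0)] /\
  [/\ rdvd (q ^+ (2 * M + 1 + n)) (F1 a b c d),
      rdvd (q ^+ (2 * M + 1 + n)) (F2 a b c d),
      rdvd (q ^+ (2 * M + 1 + n)) (F3 a b c d) &
      rdvd (q ^+ (2 * M + 1 + n)) (F4 a b c d)].

Definition close n (x y : R * R * R * R) : Prop :=
  let: (a, b, c, d) := x in let: (a', b', c', d') := y in
  [/\ rdvd (q ^+ n) (a' - a), rdvd (q ^+ n) (b' - b),
      rdvd (q ^+ n) (c' - c) & rdvd (q ^+ n) (d' - d)].

Lemma step n x : Inv n x -> exists y, Inv n.+1 y /\ close n x y.
Proof.
case: x => [[[a b] c] d] /= [[ha hb hc hd] [[r1 e1] [r2 e2] [r3 e3] [r4 e4]]].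
have [ea [eb [ec [ed [l1 l2 l3 l4]]]]] := Lin (- r1) (- r2) (- r3) (- r4).
set A := (n + M.+1)%N; set N := (2 * M + 1 + n)%N.
have qAM : q ^+ A * q ^+ M = q ^+ N by rewrite -exprD; congr (_ ^+ _); rewrite /A /N; lia.
have dA : forall e : R, rdvd (q ^+ A) (q ^+ A * e) by move=> e; exists e.
have dAM : forall z, rdvd (q ^+ M.+1) z -> rdvd (q ^+ M.+1) (q ^+ A * z + z * 0).
  by move=> z hz; rewrite mulr0 addr0; apply: rdvdMl.
have le1 : (N.+1 <= A + M.+1)%N by rewrite /A /N; lia.
have le2 : (N.+1 <= M.+1 + A)%N by rewrite /A /N; lia.
have le3 : (N.+1 <= A + A)%N by rewrite /A /N; lia.
have leA : (M.+1 <= A)%N by rewrite /A; lia.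
have leB : (n <= A)%N by rewrite /A; lia.
exists (a + q ^+ A * ea, b + q ^+ A * eb, c + q ^+ A * ec, d + q ^+ A * ed); split; last first.
  by split; apply: (rdvd_le leB); rewrite addrC addKr; apply: dA.
have sh : forall u u0 e, rdvd (q ^+ M.+1) (u - u0) -> rdvd (q ^+ M.+1) (u + q ^+ A * e - u0).
  move=> u u0 e h; rewrite addrAC; apply: rdvdD => //; apply: (rdvd_le leA); exact: dA.
have c1 : forall z w, rdvd (q ^+ M.+1) z -> rdvd (q ^+ N.+1) (z * (q ^+ A * w)).
  by move=> z w h; apply: (rdvd_le le2); exact: (rdvd_mul h (dA w)).
have c2 : forall z w, rdvd (q ^+ N.+1) ((q ^+ A * z) * (q ^+ A * w)).
  by move=> z w; apply: (rdvd_le le3); exact: (rdvd_mul (dA z) (dA w)).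
have dA1 : rdvd (q ^+ A) (q ^+ A) by exists 1; rewrite mulr1.
have c0' : forall z, rdvd (q ^+ M.+1) z -> rdvd (q ^+ N.+1) (q ^+ A * z).
  by move=> z h; apply: (rdvd_le le1); exact: (rdvd_mul dA1 h).
split; first by split; exact: sh.
have EN : (2 * M + 1 + n.+1 = N.+1)%N by rewrite /N addnS.
rewrite EN; split.
- have -> : F1 (a + q ^+ A * ea) (b + q ^+ A * eb) (c + q ^+ A * ec) (d + q ^+ A * ed)
     = (F1 a b c d + q ^+ A * (q ^+ M * - r1)) + q ^+ A * (L1 ea eb ec ed - q ^+ M * - r1).
    by rewrite /F1 /L1; ring.
  rewrite mulrA qAM e1 mulrN addrN add0r; exact: c0'.
- have -> : F2 (a + q ^+ A * ea) (b + q ^+ A * eb) (c + q ^+ A * ec) (d + q ^+ A * ed)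
     = (F2 a b c d + q ^+ A * (q ^+ M * - r2)) + q ^+ A * (L2 ea eb ec ed - q ^+ M * - r2)
       + ((a - a0) * (q ^+ A * ec) + (c - c0) * (q ^+ A * ea))
       + (q ^+ A * ea) * (q ^+ A * ec).
    by rewrite /F2 /L2; ring.
  rewrite mulrA qAM e2 mulrN addrN add0r.
  by repeat apply: rdvdD; try exact: c0'; try exact: c1; try exact: c2.
- have -> : F3 (a + q ^+ A * ea) (b + q ^+ A * eb) (c + q ^+ A * ec) (d + q ^+ A * ed)
     = (F3 a b c d + q ^+ A * (q ^+ M * - r3)) + q ^+ A * (L3 ea eb ec ed - q ^+ M * - r3)
       + ((a - a0) * (q ^+ A * ed) + (d - d0) * (q ^+ A * ea)
          + (b - b0) * (q ^+ A * ec) + (c - c0) * (q ^+ A * eb))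
       + ((q ^+ A * ea) * (q ^+ A * ed) + (q ^+ A * eb) * (q ^+ A * ec)).
    by rewrite /F3 /L3; ring.
  rewrite mulrA qAM e3 mulrN addrN add0r.
  by repeat apply: rdvdD; try exact: c0'; try exact: c1; try exact: c2.
- have -> : F4 (a + q ^+ A * ea) (b + q ^+ A * eb) (c + q ^+ A * ec) (d + q ^+ A * ed)
     = (F4 a b c d + q ^+ A * (q ^+ M * - r4)) + q ^+ A * (L4 ea eb ec ed - q ^+ M * - r4)
       + ((b - b0) * (q ^+ A * ed) + (d - d0) * (q ^+ A * eb))
       + (q ^+ A * eb) * (q ^+ A * ed).
    by rewrite /F4 /L4; ring.
  rewrite mulrA qAM e4 mulrN addrN add0r.
  by repeat apply: rdvdD; try exact: c0'; try exact: c1; try exact: c2.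
Qed.


Hypothesis Init : Inv 0 (a0, b0, c0, d0).

Definition stepf n (x : {x | Inv n x}) : {y | Inv n.+1 y} :=
  let y := cid (@step n (sval x) (svalP x)) in exist _ (sval y) (proj1 (svalP y)).

Fixpoint seqx n : {x | Inv n x} :=
  match n with 0 => exist _ (a0, b0, c0, d0) Init | n'.+1 => stepf n' (seqx n') end.

Lemma seq_close n : close n (sval (seqx n)) (sval (seqx n.+1)).
Proof. rewrite /= /stepf /=; exact: (proj2 (svalP (cid (@step n _ (svalP (seqx n)))))). Qed.

Lemma close_pseq (y z : R) n : rdvd (q ^+ n) (y - z) -> pseq y n = pseq z n.
Proof.
move=> h; have -> : y = z + (y - z) by rewrite addrC subrK.
by rewrite pseqD (@rdvd_pseq p p1 _ _ h) addr0 pseq_mod.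
Qed.

Ltac eqm_tac := repeat first [apply: eqmD | apply: eqmM | apply: eqmN | assumption | reflexivity].

Lemma newton : exists a b c d : R,
  [/\ F1 a b c d = 0, F2 a b c d = 0, F3 a b c d = 0 & F4 a b c d = 0].
Proof.
pose xs n := sval (seqx n).
have hI : forall n, Inv n (xs n) by move=> n; exact: svalP.
have hC : forall n, close n (xs n) (xs n.+1) by move=> n; exact: seq_close.
have hCa : forall n, pseq (xs n.+1).1.1.1 n = pseq (xs n).1.1.1 n.
  move=> n; move: (hC n); case: (xs n) => [[[a b] c] d].
  by case: (xs n.+1) => [[[a' b'] c'] d'] /= [h1 h2 h3 h4]; exact: close_pseq.
have hCb : forall n, pseq (xs n.+1).1.1.2 n = pseq (xs n).1.1.2 n.
  move=> n; move: (hC n); case: (xs n) => [[[a b] c] d].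
  by case: (xs n.+1) => [[[a' b'] c'] d'] /= [h1 h2 h3 h4]; exact: close_pseq.
have hCc : forall n, pseq (xs n.+1).1.2 n = pseq (xs n).1.2 n.
  move=> n; move: (hC n); case: (xs n) => [[[a b] c] d].
  by case: (xs n.+1) => [[[a' b'] c'] d'] /= [h1 h2 h3 h4]; exact: close_pseq.
have hCd : forall n, pseq (xs n.+1).2 n = pseq (xs n).2 n.
  move=> n; move: (hC n); case: (xs n) => [[[a b] c] d].
  by case: (xs n.+1) => [[[a' b'] c'] d'] /= [h1 h2 h3 h4]; exact: close_pseq.
have [la Ha] := @padic_lim p _ hCa.
have [lb Hb] := @padic_lim p _ hCb.
have [lc Hc] := @padic_lim p _ hCc.
have [ld Hd] := @padic_lim p _ hCd.
exists la, lb, lc, ld.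
have hF : forall N, [/\ rdvd (q ^+ N) (F1 (xs N).1.1.1 (xs N).1.1.2 (xs N).1.2 (xs N).2),
  rdvd (q ^+ N) (F2 (xs N).1.1.1 (xs N).1.1.2 (xs N).1.2 (xs N).2),
  rdvd (q ^+ N) (F3 (xs N).1.1.1 (xs N).1.1.2 (xs N).1.2 (xs N).2) &
  rdvd (q ^+ N) (F4 (xs N).1.1.1 (xs N).1.1.2 (xs N).1.2 (xs N).2)].
  move=> N; move: (hI N); case: (xs N) => [[[a b] c] d] /= [_ [h1 h2 h3 h4]].
  have le : (N <= 2 * M + 1 + N)%N by lia.
  by split; apply: (rdvd_le le).
split; apply: (@padic_eq0 p) => N; have [h1 h2 h3 h4] := hF N; move: (Ha N) (Hb N) (Hc N) (Hd N) => ha hb hc hd.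
- rewrite -(@rdvd_pseq p p1 _ _ h1); rewrite /F1; eqm_tac.
- rewrite -(@rdvd_pseq p p1 _ _ h2); rewrite /F2; eqm_tac.
- rewrite -(@rdvd_pseq p p1 _ _ h3); rewrite /F3; eqm_tac.
- rewrite -(@rdvd_pseq p p1 _ _ h4); rewrite /F4; eqm_tac.
Qed.

End Newton.


Section Cases.
Variable p : nat.
Hypothesis p1 : (1 < p)%N.
Local Notation R := ('Z_p[p]).
Local Notation q := (p%:R : R).

Lemma newton2 (g0 g1 g2 g3 a0 b0 c0 d0 : R) (M : nat) :
  (forall s1 s2 s3 s4 : R, exists ea eb ec ed : R,
  [/\ rdvd (q ^+ M.+1) (ea + ec - q ^+ M * s1),
      rdvd (q ^+ M.+1) (eb + ed + c0 * ea + a0 * ec - q ^+ M * s2),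
      rdvd (q ^+ M.+1) (d0 * ea + c0 * eb + b0 * ec + a0 * ed - q ^+ M * s3) &
      rdvd (q ^+ M.+1) (d0 * eb + b0 * ed - q ^+ M * s4)]) ->
  rdvd (q ^+ (2 * M + 1)) (a0 + c0 - g3) ->
  rdvd (q ^+ (2 * M + 1)) (b0 + d0 + a0 * c0 - g2) ->
  rdvd (q ^+ (2 * M + 1)) (a0 * d0 + b0 * c0 - g1) ->
  rdvd (q ^+ (2 * M + 1)) (b0 * d0 - g0) ->
  exists a b c d : R, [/\ a + c = g3, b + d + a * c = g2, a * d + b * c = g1 & b * d = g0].
Proof.
move=> Lin i1 i2 i3 i4.
have [||a [b [c [d [e1 e2 e3 e4]]]]] := @newton p p1 g0 g1 g2 g3 a0 b0 c0 d0 M.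
- exact: Lin.
- rewrite /Inv !subrr addn0; split; first by split; apply: rdvd0.
  by split.
exists a, b, c, d; split; apply/eqP; rewrite -subr_eq0; apply/eqP.
- exact: e1.
- exact: e2.
- exact: e3.
- exact: e4.
Qed.

Lemma lin_case1 (k : nat) (al' be de' w t1 : R) :
  de' * w - 1 = q * t1 ->
  let K := q ^+ k in
  let a0 := q * (K * al') in let c0 := - (q * (K * al')) in
  let b0 := q * be in let d0 := q * (be - K * de') in
  forall s1 s2 s3 s4 : R, exists ea eb ec ed : R,
  [/\ rdvd (q ^+ k.+2) (ea + ec - q ^+ k.+1 * s1),
      rdvd (q ^+ k.+2) (eb + ed + c0 * ea + a0 * ec - q ^+ k.+1 * s2),
      rdvd (q ^+ k.+2) (d0 * ea + c0 * eb + b0 * ec + a0 * ed - q ^+ k.+1 * s3) &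
      rdvd (q ^+ k.+2) (d0 * eb + b0 * ed - q ^+ k.+1 * s4)].
Proof.
move=> ht K a0 c0 b0 d0 s1 s2 s3 s4.
rewrite !exprS -/K.
set P := q * K.
set eb := - (w * s4).
set ea := - (w * (s3 + 2 * al' * eb)).
set T := P * (s2 - q * (K * al') * s1) + 2 * q * (K * al') * ea.
exists ea, eb, (P * s1 - ea), (T - eb); split.
- by exists 0; rewrite /ea /eb /P; ring.
- by exists 0; rewrite /T /ea /eb /P /a0 /c0; ring.
- have -> : d0 * ea + c0 * eb + b0 * (P * s1 - ea) + a0 * (T - eb) - P * s3
     = q * K * (de' * w - 1) * (s3 + 2 * al' * eb)
       + q * (q * K) * (be * s1 + K * al' * (s2 - q * (K * al') * s1) + 2 * K * al' * al' * ea).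
    by rewrite /d0 /c0 /b0 /a0 /T /ea /eb /P; ring.
  by rewrite ht; exists (t1 * (s3 + 2 * al' * eb)
       + (be * s1 + K * al' * (s2 - q * (K * al') * s1) + 2 * K * al' * al' * ea)); rewrite /ea /eb /P; ring.
- have -> : d0 * eb + b0 * (T - eb) - P * s4
     = q * K * (de' * w - 1) * s4
       + q * (q * K) * (be * (s2 - q * (K * al') * s1) + 2 * be * al' * ea).
    by rewrite /d0 /b0 /T /ea /eb /P; ring.
  by rewrite ht; exists (t1 * s4
       + (be * (s2 - q * (K * al') * s1) + 2 * be * al' * ea)); rewrite /ea /eb /P; ring.
Qed.

Lemma lin_case2 (k : nat) (al' be t W w' t2 t3 : R) :
  2 * be * al' * W - 1 = q * t2 -> 2 * al' * w' - 1 = q * t3 ->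
  let K := q ^+ k in
  let a0 := q * (K * al') in let c0 := - (q * (K * al')) in
  let b0 := q * be in let d0 := q * (be - q * K * t) in
  forall s1 s2 s3 s4 : R, exists ea eb ec ed : R,
  [/\ rdvd (q ^+ k.+3) (ea + ec - q ^+ k.+2 * s1),
      rdvd (q ^+ k.+3) (eb + ed + c0 * ea + a0 * ec - q ^+ k.+2 * s2),
      rdvd (q ^+ k.+3) (d0 * ea + c0 * eb + b0 * ec + a0 * ed - q ^+ k.+2 * s3) &
      rdvd (q ^+ k.+3) (d0 * eb + b0 * ed - q ^+ k.+2 * s4)].
Proof.
move=> h2 h3 K a0 c0 b0 d0 s1 s2 s3 s4.
rewrite !exprS -/K.
set P := q * (q * K).
set ea := W * s4.
set X := s3 - (2 * K * al' * al' - t) * ea.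
set eb' := - (w' * X).
set eb := q * eb'.
set T := P * (s2 - q * (K * al') * s1) + 2 * q * (K * al') * ea.
exists ea, eb, (P * s1 - ea), (T - eb); split.
- by exists 0; rewrite /P; ring.
- by exists 0; rewrite /T /eb /eb' /X /ea /P /a0 /c0; ring.
- have -> : d0 * ea + c0 * eb + b0 * (P * s1 - ea) + a0 * (T - eb) - P * s3
     = P * (2 * al' * w' - 1) * X
       + q * P * (be * s1 + K * al' * (s2 - q * (K * al') * s1)).
    by rewrite /d0 /c0 /b0 /a0 /T /eb /eb' /X /ea /P; ring.
  by rewrite h3; exists (t3 * X + (be * s1 + K * al' * (s2 - q * (K * al') * s1)));
    rewrite /T /eb /eb' /X /ea /P; ring.
- have -> : d0 * eb + b0 * (T - eb) - P * s4
     = P * (2 * be * al' * W - 1) * s4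
       + q * P * (- t * eb' + be * (s2 - q * (K * al') * s1)).
    by rewrite /d0 /b0 /T /eb /eb' /X /ea /P; ring.
  by rewrite h2; exists (t2 * s4 + (- t * eb' + be * (s2 - q * (K * al') * s1)));
    rewrite /T /eb /eb' /X /ea /P; ring.
Qed.

End Cases.


Section Polys.
Variable R : comNzRingType.

Definition quart (c3 c2 c1 c0 : R) : {poly R} :=
  'X^4 + c3%:P * 'X^3 + c2%:P * 'X^2 + c1%:P * 'X + c0%:P.

Lemma quart_eq (g : {poly R}) : g \is monic -> size g = 5%N ->
  g = quart g`_3 g`_2 g`_1 g`_0.
Proof.
move=> mg sg.
have l4 : g`_4 = 1 by move/monicP: mg; rewrite /lead_coef sg.
rewrite -[LHS]coefK poly_def sg.
rewrite !big_ord_recr big_ord0 /= add0r l4 /quart -!mul_polyC.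
by rewrite expr1 expr0 mulr1 polyC1 mul1r; ring.
Qed.

Lemma prodq (a b c d : R) :
  ('X^2 + a%:P * 'X + b%:P) * ('X^2 + c%:P * 'X + d%:P)
  = quart (a + c) (b + d + a * c) (a * d + b * c) (b * d).
Proof. rewrite /quart !polyCD !polyCM; ring. Qed.

Lemma coef_quart c3 c2 c1 c0 :
  [/\ (quart c3 c2 c1 c0)`_3 = c3, (quart c3 c2 c1 c0)`_2 = c2,
      (quart c3 c2 c1 c0)`_1 = c1 & (quart c3 c2 c1 c0)`_0 = c0].
Proof. by rewrite /quart; split; rewrite !coefD !coefCM !coefXn !coefX !coefC /=; ring. Qed.

Definition quad (a b : R) : {poly R} := 'X^2 + a%:P * 'X + b%:P.

Lemma size_quad (a b : R) : (1 < size (quad a b))%N.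
Proof.
have h : (quad a b)`_2 = 1.
  by rewrite /quad !coefD coefCM coefXn coefX coefC /=; ring.
rewrite ltnNge; apply/negP => hs.
have : (quad a b)`_2 = 0.
  by apply: nth_default; apply: leq_trans hs _.
by rewrite h; apply/eqP; rewrite oner_neq0.
Qed.

End Polys.
Arguments quart {R}.
Arguments quad {R}.
Arguments coef_quart {R}.
Arguments prodq {R}.
Arguments size_quad {R}.
Arguments quart_eq {R}.


Section Main.
Variable p : nat.
Hypothesis p1 : (1 < p)%N.
Local Notation R := ('Z_p[p]).
Local Notation q := (p%:R : R).

Lemma finish (g : {poly R}) M (a0 b0 c0 d0 : R) :
  g \is monic -> size g = 5%N ->
  (forall s1 s2 s3 s4 : R, exists ea eb ec ed : R,
  [/\ rdvd (q ^+ M.+1) (ea + ec - q ^+ M * s1),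
      rdvd (q ^+ M.+1) (eb + ed + c0 * ea + a0 * ec - q ^+ M * s2),
      rdvd (q ^+ M.+1) (d0 * ea + c0 * eb + b0 * ec + a0 * ed - q ^+ M * s3) &
      rdvd (q ^+ M.+1) (d0 * eb + b0 * ed - q ^+ M * s4)]) ->
  poly_congr (q ^+ (2 * M + 1)) g
     (quart (a0 + c0) (b0 + d0 + a0 * c0) (a0 * d0 + b0 * c0) (b0 * d0)) ->
  reducible g.
Proof.
move=> mg sg Lin hc.
have [k3 k2 k1 k0] := coef_quart (a0 + c0) (b0 + d0 + a0 * c0) (a0 * d0 + b0 * c0) (b0 * d0).
have i3 := hc 3%N; have i2 := hc 2%N; have i1 := hc 1%N; have i0 := hc 0%N.
rewrite k3 in i3; rewrite k2 in i2; rewrite k1 in i1; rewrite k0 in i0.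
have [a [b [c [d [e1 e2 e3 e4]]]]] := @newton2 p p1 _ _ _ _ _ _ _ _ _ Lin
  (rdvd_eq (opprB _ _) (rdvdN i3)) (rdvd_eq (opprB _ _) (rdvdN i2))
  (rdvd_eq (opprB _ _) (rdvdN i1)) (rdvd_eq (opprB _ _) (rdvdN i0)).
exists (quad a b), (quad c d); split; first exact: size_quad.
split; first exact: size_quad.
by rewrite /quad prodq e1 e2 e3 e4 -quart_eq.
Qed.

End Main.

Theorem claim3 (p : nat) (alpha beta gamma : 'Z_p[p]) (k : nat) :
  prime p -> odd p ->
  ~ rdvd (p%:R : 'Z_p[p]) beta -> ~ rdvd (p%:R : 'Z_p[p]) gamma ->
  (alpha, beta - gamma) <> (0, 0) ->
  (* k is the largest integer with p^k | alpha and p^k | beta - gamma *)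
  rdvd ((p%:R : 'Z_p[p]) ^+ k) alpha ->
  rdvd ((p%:R : 'Z_p[p]) ^+ k) (beta - gamma) ->
  ~ (rdvd ((p%:R : 'Z_p[p]) ^+ k.+1) alpha /\
     rdvd ((p%:R : 'Z_p[p]) ^+ k.+1) (beta - gamma)) ->
  let f : {poly 'Z_p[p]} :=
    ('X^2 + (p%:R * alpha)%:P * 'X + (p%:R * beta)%:P) *
    ('X^2 - (p%:R * alpha)%:P * 'X + (p%:R * gamma)%:P) in
  (* Case 1 *)
  (~ rdvd ((p%:R : 'Z_p[p]) ^+ k.+1) (beta - gamma) ->
   forall g : {poly 'Z_p[p]}, g \is monic -> size g = 5%N ->
     poly_congr ((p%:R : 'Z_p[p]) ^+ (2 * k + 4)) g f -> reducible g) /\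
  (* Case 2 *)
  (rdvd ((p%:R : 'Z_p[p]) ^+ k.+1) (beta - gamma) ->
   ~ rdvd ((p%:R : 'Z_p[p]) ^+ k.+1) alpha ->
   forall g : {poly 'Z_p[p]}, g \is monic -> size g = 5%N ->
     poly_congr ((p%:R : 'Z_p[p]) ^+ (2 * k + 5)) g f -> reducible g).
Proof.
move=> pr op nb ng _ hak hbk _ f.
have p1 := prime_gt1 pr.
set q := (p%:R : 'Z_p[p]).
have [al' ha] := hak.
have [de' hd] := hbk.
have hf : f = quart (q * alpha + - (q * alpha))
     (q * beta + q * gamma + q * alpha * - (q * alpha))
     (q * alpha * (q * gamma) + q * beta * - (q * alpha)) (q * beta * (q * gamma)).
  by rewrite /f -prodq /quad polyCN mulNr.
split.
- move=> nd g mg sg hc.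
  have hg : gamma = beta - q ^+ k * de' by rewrite -hd; ring.
  have nd' : ~ rdvd q de'.
    by case=> c hc'; apply: nd; exists c; rewrite hd hc' exprSr; ring.
  have [w [t1 ht]] := @unit_mod p pr _ nd'.
  apply: (@finish p p1 g k.+1 (q * alpha) (q * beta) (- (q * alpha)) (q * gamma) mg sg).
  + rewrite ha hg; exact: (@lin_case1 p k al' beta de' w t1 ht).
  + rewrite -hf => i; apply: (rdvd_le _ (hc i)); lia.
- move=> [t ht'] na g mg sg hc.
  have hg : gamma = beta - q * q ^+ k * t by rewrite -[q * q ^+ k]exprS -ht'; ring.
  have na' : ~ rdvd q al'.
    by case=> c hc'; apply: na; exists c; rewrite ha hc' exprSr; ring.
  have [wa [ta hta]] := @unit_mod p pr _ na'.
  have [wb [tb htb]] := @unit_mod p pr _ nb.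
  set h : 'Z_p[p] := ((p.+1)./2)%:R.
  have h2 : 2 * h = 1 + q.
    have e : (2 * (p.+1)./2)%N = p.+1 by rewrite mul2n halfK /= op subn0.
    by rewrite /h -natrM e -addn1 natrD addrC.
  have ea : al' * wa = 1 + q * ta by rewrite -hta; ring.
  have eb : beta * wb = 1 + q * tb by rewrite -htb; ring.
  have e2 : 2 * beta * al' * (h * wb * wa) - 1
      = q * (tb + ta + q * tb * ta + (1 + q * tb) * (1 + q * ta)).
    have -> : 2 * beta * al' * (h * wb * wa) = (2 * h) * (beta * wb) * (al' * wa) by ring.
    by rewrite h2 ea eb; ring.
  have e3 : 2 * al' * (h * wa) - 1 = q * (ta + 1 + q * ta).
    have -> : 2 * al' * (h * wa) = (2 * h) * (al' * wa) by ring.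
    by rewrite h2 ea; ring.
  apply: (@finish p p1 g k.+2 (q * alpha) (q * beta) (- (q * alpha)) (q * gamma) mg sg).
  + rewrite ha hg; exact: (@lin_case2 p k al' beta t _ _ _ _ e2 e3).
  + rewrite -hf => i; apply: (rdvd_le _ (hc i)); lia.
Qed.
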